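(* Let $r\ge 3$ and let $G$ be a graph of order $n$ containing no complete subgraph $K_{r+1}$. Then $q_n(G)<\left(1-\frac{3}{3r-1}\right)n$, where $q_n(G)$ is the smallest eigenvalue of the signless Laplacian of $G$.
   Context: Graphs are finite and simple with $n\ge 1$ vertices. For a graph $G$ with adjacency matrix $A$ and diagonal degree matrix $D$, the signless Laplacian is $Q(G)=D+A$; $q_n(G)$ is its smallest eigenvalue. *)

(* Defs.v *)
From mathcomp Require Import all_boot all_order all_algebra.
From mathcomp Require Import classical_sets reals.
Set Implicit Arguments. Unset Strict Implicit. Unset Printing Implicit Defensive.
Import Order.TTheory GRing.Theory Num.Theory.
Local Open Scope ring_scope.

Definition simple_graph (n : nat) (e : rel 'I_n) : Prop :=
  symmetric e /\ irreflexive e.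

Definition is_clique (n : nat) (e : rel 'I_n) (S : {set 'I_n}) : Prop :=
  forall x y, x \in S -> y \in S -> x != y -> e x y.

Definition has_Kk (n : nat) (e : rel 'I_n) (k : nat) : Prop :=
  exists S : {set 'I_n}, #|S| = k /\ is_clique e S.

Definition deg (n : nat) (e : rel 'I_n) (i : 'I_n) : nat := #|[set j | e i j]|.

Definition adjmx (R : realType) (n : nat) (e : rel 'I_n) : 'M[R]_n :=
  \matrix_(i, j) (e i j)%:R.

Definition degmx (R : realType) (n : nat) (e : rel 'I_n) : 'M[R]_n :=
  \matrix_(i, j) ((i == j)%:R * (deg e i)%:R).

Definition signless_laplacian (R : realType) (n : nat) (e : rel 'I_n) : 'M[R]_n :=
  degmx R e + adjmx R e.

(* Smallest eigenvalue of Q(G): the infimum (= minimum, the set being finite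
   and nonempty) of the eigenvalues of Q(G). *)
Definition q_min (R : realType) (n : nat) (e : rel 'I_n) : R :=
  inf [set a : R | eigenvalue (signless_laplacian R e) a].

(* Main.v *)
Require Import Defs.
From mathcomp Require Import all_boot all_order all_algebra.
From mathcomp Require Import classical_sets reals.
From mathcomp Require Import complex ring lra zify.
Import Order.TTheory GRing.Theory Num.Theory Num.Def.
Local Open Scope ring_scope.

Section Ray.
Variable R : realType.
Local Notation C := (R[i]).
Local Notation f := (real_complex R).

Lemma creal (r : R) : (f r : C) \is Num.real.
Proof. by apply/complex_realP; exists r. Qed.

Lemma conj_f (r : R) : conjC (f r) = f r.
Proof. exact/conj_Creal/creal. Qed.

Lemma rayleigh n (A : 'M[R]_n) (x : 'rV[R]_n) (c : R) :
  A^T = A -> (x *m A *m x^T) 0 0 < c * (x *m x^T) 0 0 ->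
  exists a, eigenvalue A a /\ a < c.
Proof.
move=> Asym Hlt.
pose Ac := map_mx f A.
have Ac_sym : Ac \is symmetricmx.
  apply/is_hermitianmxP; rewrite expr0 scale1r map_mx_id //.
  by rewrite /Ac map_trmx Asym.
have Ac_real : Ac \is a mxOver Num.real.
  by apply/mxOverP => i j; rewrite mxE creal.
have Ac_herm : Ac \is hermsymmx by exact: realsym_hermsym.
have /orthomx_spectralP HA := hermitian_normalmx Ac_herm.
have dreal := hermitian_spectral_diag_real Ac_herm.
set P := spectralmx Ac in HA.
set d := spectral_diag Ac in HA dreal.
have Pu : P \is unitarymx by exact: spectral_unitarymx.
have Punit : P \in unitmx by exact: unitarymx_unit.
have HPinv : invmx P = (P ^t*)%sesqui by exact: invmx_unitary.
have PtP : (P ^t*)%sesqui *m P = 1%:M by rewrite -HPinv mulVmx.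
have PPt : P *m (P ^t*)%sesqui = 1%:M by rewrite -HPinv mulmxV.
pose xc := map_mx f x.
have xcT : (xc ^t*)%sesqui = map_mx f x^T.
  by apply/matrixP => i j; rewrite !mxE conj_f.
pose w := xc *m (P ^t*)%sesqui.
have wT : (w ^t*)%sesqui = P *m (xc ^t*)%sesqui.
  rewrite /w; apply/matrixP => i j; rewrite !mxE rmorph_sum; apply: eq_bigr => k _.
  by rewrite !mxE rmorphM /= conjCK conj_f mulrC.
have E1 : f ((x *m A *m x^T) 0 0) = \sum_j (w 0 j * conjC (w 0 j)) * d 0 j.
  have -> : f ((x *m A *m x^T) 0 0) = (xc *m Ac *m (xc ^t*)%sesqui) 0 0.
    by rewrite xcT /xc /Ac -!map_mxM [RHS]mxE.
  rewrite HA HPinv !mulmxA -/w -mulmxA -wT mxE; apply: eq_bigr => j _.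
  by rewrite mul_mx_diag !mxE; rewrite mulrAC.
have E2 : f ((x *m x^T) 0 0) = \sum_j (w 0 j * conjC (w 0 j)).
  have -> : f ((x *m x^T) 0 0) = (xc *m (xc ^t*)%sesqui) 0 0.
    by rewrite xcT /xc /Ac -!map_mxM [RHS]mxE.
  have -> : xc *m (xc ^t*)%sesqui = w *m (w ^t*)%sesqui.
    by rewrite wT /w mulmxA -(mulmxA xc) PtP mulmx1.
  by rewrite mxE; apply: eq_bigr => j _; rewrite !mxE.
have [/forallP Hall|] := boolP [forall j, f c <= d 0 j].
  exfalso; move: Hlt; rewrite -ltcR rmorphM /= E1 E2 mulr_sumr.
  rewrite le_gtF //; apply: ler_sum => j _.
  rewrite mulrC; apply: ler_wpM2l => //; exact: mul_conjC_ge0.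
rewrite negb_forall => /existsP [j Hj].
have djr : d 0 j \is Num.real by move/mxOverP: dreal; apply.
have [a Ha] := complex_realP _ djr.
exists a; split; last first.
  by rewrite -ltcR -Ha real_ltNge // creal.
rewrite eigenvalue_root_char -(fmorph_root f) map_char_poly /= -Ha -eigenvalue_root_char.
apply/eigenvalueP; exists (row j P).
  have -> : row j P *m Ac = row j (diag_mx d *m P).
    by rewrite -row_mul HA HPinv !mulmxA PPt mul1mx.
  by apply/rowP => k; rewrite mul_diag_mx !mxE.
apply/eqP => Hr.
have : row j (P *m (P ^t*)%sesqui) = row j 1%:M by rewrite PPt.
rewrite row_mul Hr mul0mx => /rowP /(_ j); rewrite !mxE eqxx => /eqP.
by rewrite eq_sym oner_eq0.
Qed.
End Ray.

Lemma degE (R : realType) n (e : rel 'I_n) i :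
  (deg e i)%:R = \sum_j (e i j)%:R :> R.
Proof.
rewrite /deg -sum1_card natr_sum big_mkcond /=; apply: eq_bigr => j _.
by rewrite inE; case: (e i j).
Qed.

Lemma quadQ (R : realType) n (e : rel 'I_n) (x : 'rV[R]_n) : symmetric e ->
  (x *m signless_laplacian R e *m x^T) 0 0 *+ 2 =
  \sum_i \sum_j (e i j)%:R * (x 0 i + x 0 j) ^+ 2.
Proof.
move=> esym.
have T1 : \sum_i \sum_j (e i j)%:R * x 0 i ^+ 2 = \sum_i (deg e i)%:R * x 0 i ^+ 2 :> R.
  by apply: eq_bigr => i _; rewrite degE mulr_suml.
have T2 : \sum_i \sum_j (e i j)%:R * x 0 j ^+ 2 = \sum_i (deg e i)%:R * x 0 i ^+ 2 :> R.
  rewrite exchange_big -T1 /=; apply: eq_bigr => i _; apply: eq_bigr => j _.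
  by rewrite esym.
have L : (x *m signless_laplacian R e *m x^T) 0 0 =
   \sum_i (deg e i)%:R * x 0 i ^+ 2 + \sum_i \sum_j (e i j)%:R * (x 0 i * x 0 j).
  rewrite /signless_laplacian mulmxDr mulmxDl mxE [in X in _ + X]mxE; congr (_ + _).
    rewrite mxE; apply: eq_bigr => j _; rewrite !mxE (bigD1 j) //= big1 ?addr0.
      by rewrite !mxE eqxx mul1r; ring.
    by move=> i /negbTE ij; rewrite !mxE ij mul0r mulr0.
  rewrite exchange_big /=; apply: eq_bigr => i _; rewrite mxE mulr_suml.
  apply: eq_bigr => j _; rewrite !mxE. 
  by ring.
rewrite L.
have -> : \sum_i \sum_j (e i j)%:R * (x 0 i + x 0 j) ^+ 2 =
  \sum_i \sum_j (e i j)%:R * x 0 i ^+ 2 + \sum_i \sum_j (e i j)%:R * x 0 j ^+ 2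
  + (\sum_i \sum_j (e i j)%:R * (x 0 i * x 0 j)) *+ 2 :> R.
  rewrite -sumrMnl -!big_split /=; apply: eq_bigr => i _.
  rewrite -sumrMnl -!big_split /=; apply: eq_bigr => j _; ring.
rewrite T1 T2; ring.
Qed.

Lemma dot_pos (R : realType) n (x : 'rV[R]_n) : x != 0 -> 0 < (x *m x^T) 0 0.
Proof.
move=> Hx.
have : ~~ [forall j, x 0 j == 0].
  apply: contra Hx => /forallP H; apply/eqP/rowP => j; rewrite mxE; exact/eqP/H.
rewrite negb_forall => /existsP [j Hj].
rewrite mxE (bigD1 j) //=.
have h1 : 0 < x 0 j * x^T j 0 by rewrite mxE -expr2 lt_def sqrf_eq0 Hj sqr_ge0.
have h2 : 0 <= \sum_(i | i != j) x 0 i * x^T i 0.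
  by apply: sumr_ge0 => i _; rewrite mxE -expr2 sqr_ge0.
lra.
Qed.

Lemma eig_ge0 (R : realType) n (e : rel 'I_n) a : symmetric e ->
  eigenvalue (signless_laplacian R e) a -> 0 <= a.
Proof.
move=> esym /eigenvalueP [v Hv vn0].
have H1 : (v *m signless_laplacian R e *m v^T) 0 0 = a * (v *m v^T) 0 0.
  by rewrite Hv -scalemxAl mxE.
have H2 : 0 <= (v *m signless_laplacian R e *m v^T) 0 0 *+ 2.
  rewrite quadQ //; apply: sumr_ge0 => i _; apply: sumr_ge0 => j _.
  by rewrite mulr_ge0 ?ler0n ?sqr_ge0.
have H3 := @dot_pos R n v vn0.
rewrite mulr2n H1 in H2.
nra.
Qed.

Lemma quad_delta (R : realType) n (e : rel 'I_n) v : irreflexive e ->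
  let x : 'rV[R]_n := delta_mx 0 v in
  (x *m signless_laplacian R e *m x^T) 0 0 = (deg e v)%:R
  /\ (x *m x^T) 0 0 = 1.
Proof.
move=> eirr x; rewrite /x trmx_delta -!rowE -!colE !mxE eqxx eirr.
by rewrite mul1r addr0.
Qed.

Lemma sumI (R : realType) n (P : pred 'I_n) :
  \sum_j (P j)%:R = #|[set j | P j]|%:R :> R.
Proof.
rewrite -sum1_card natr_sum [in RHS]big_mkcond /=; apply: eq_bigr => j _.
by rewrite inE; case: (P j).
Qed.

Lemma two_sets (R : realType) n (e : rel 'I_n) (A B : {set 'I_n}) :
  symmetric e -> (forall w, w \in A -> w \notin B) ->
  (forall w w', w \in A -> w' \in A -> ~~ e w w') ->
  (forall w w', w \in B -> w' \in B -> ~~ e w w') ->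
  let x : 'rV[R]_n := \row_w ((w \in A)%:R - (w \in B)%:R) in
  (x *m signless_laplacian R e *m x^T) 0 0 <= #|A :|: B|%:R * (n - #|A :|: B|)%:R
  /\ (x *m x^T) 0 0 = #|A :|: B|%:R.
Proof.
move=> esym dAB iA iB x.
have dis w : w \in A -> w \in B -> False.
  by move=> wA wB; move: (dAB w wA); rewrite wB.
set U := A :|: B.
have cardC : #|~: U| = (n - #|U|)%N.
  by move: (cardsC U); rewrite card_ord; move: #|U| #|~: U| => a b <-; rewrite addKn.
split.
  have H : (x *m signless_laplacian R e *m x^T) 0 0 *+ 2 <=
     \sum_i \sum_j ((i \in U)%:R * (j \notin U)%:R + (i \notin U)%:R * (j \in U)%:R).
    rewrite quadQ //; apply: ler_sum => i _; apply: ler_sum => j _.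
    rewrite !mxE /U !inE.
    have := dis i; have := dis j; have := iA i j; have := iB i j.
    case: (i \in A); case: (i \in B); case: (j \in A); case: (j \in B); case: (e i j);
      move=> /= h1 h2 h3 h4; rewrite ?expr2;
      try (by exfalso; [apply: h3 | apply: h4]);
      try (by move: (h1 isT isT));
      try (by move: (h2 isT isT)); lra.
  have E : \sum_i \sum_j ((i \in U)%:R * (j \notin U)%:R + (i \notin U)%:R * (j \in U)%:R)
        = (#|U|%:R * (n - #|U|)%:R) *+ 2 :> R.
    rewrite (eq_bigr (fun i => (i \in U)%:R * \sum_j (j \notin U)%:R
        + (i \notin U)%:R * \sum_j (j \in U)%:R)); last first.
      by move=> i _; rewrite big_split /= -!mulr_sumr.
    rewrite big_split /= -!mulr_suml !sumI.
    have -> : [set j | j \notin U] = ~: U by apply/setP => j; rewrite !inE.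
    have -> : [set j | j \in U] = U by apply/setP => j; rewrite !inE.
    rewrite cardC; ring.
  rewrite E in H.
  by rewrite -(ler_pMn2r (_ : (0 < 2)%N)).
rewrite mxE (eq_bigr (fun j => (j \in U)%:R)); first by rewrite sumI; have -> : [set j | j \in U] = U by apply/setP => j; rewrite !inE.
move=> j _; rewrite !mxE /U !inE.
have := dis j.
case: (j \in A); case: (j \in B) => /= h; rewrite ?expr2; try (by exfalso; apply: h); lra.
Qed.

Lemma clique_add n (e : rel 'I_n) (A : {set 'I_n}) a : symmetric e ->
  is_clique e A -> (forall y, y \in A -> y != a -> e a y) -> is_clique e (a |: A).
Proof.
move=> esym cA ha x y; rewrite !in_setU1.
case/orP => [/eqP-> | xA]; case/orP => [/eqP-> | yA] //; first by rewrite eqxx.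
- by move=> ay; apply: ha => //; rewrite eq_sym.
- by move=> xa; rewrite esym; apply: ha.
- by apply: cA.
Qed.

Lemma clique_sub n (e : rel 'I_n) (A B : {set 'I_n}) :
  A \subset B -> is_clique e B -> is_clique e A.
Proof. by move=> /fintype.subsetP sAB cB x y xA yA; apply: cB; apply: sAB. Qed.

Lemma cardsum n (P : pred 'I_n) : #|[set w | P w]| = (\sum_w P w)%N.
Proof.
rewrite -sum1_card big_mkcond /=; apply: eq_bigr => j _.
by rewrite inE; case: (P j).
Qed.

Lemma dc n (P : 'I_n -> 'I_n -> bool) (K : {set 'I_n}) :
  (\sum_(v in K) #|[set w | P v w]| = \sum_w #|[set v in K | P v w]|)%N.
Proof.
under eq_bigr do rewrite cardsum.
rewrite exchange_big /=; apply: eq_bigr => w _.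
rewrite cardsum big_mkcond /=; apply: eq_bigr => v _.
by case: (v \in K).
Qed.

Definition cliqueb {n} (e : rel 'I_n) (S : {set 'I_n}) :=
  [forall x in S, forall y in S, (x != y) ==> e x y].

Lemma cliqueP {n} (e : rel 'I_n) S : is_clique e S <-> cliqueb e S.
Proof.
split.
  move=> H; apply/forall_inP => x xS; apply/forall_inP => y yS; apply/implyP; exact: H.
move=> /forall_inP H x y xS yS xy.
by move: (H x xS) => /forall_inP /(_ y yS) /implyP; apply.
Qed.

Lemma maxclique n r (e : rel 'I_n) : simple_graph e -> ~ has_Kk e r.+1 ->
  (2 <= r)%N -> (exists v u, e v u) ->
  exists (K : {set 'I_n}) k, #|K| = k /\ is_clique e K /\ (2 <= k <= r)%N /\
    (forall S, is_clique e S -> #|S| = k.+1 -> False).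
Proof.
move=> [esym eirr] noK r2 [v [u evu]].
pose Pk k := [exists S : {set 'I_n}, (#|S| == k) && cliqueb e S] && (k <= r)%N.
have P2 : Pk 2%N.
  rewrite /Pk r2 andbT; apply/existsP; exists [set v; u].
  have vu : v != u by apply: contraTneq evu => ->; rewrite eirr.
  rewrite cards2 vu eqxx /=; apply/cliqueP => x y; rewrite !inE.
  by case/orP => /eqP->; case/orP => /eqP->; rewrite ?eqxx // esym.
have exP : exists k, Pk k by exists 2%N.
have ubP : forall k, Pk k -> (k <= r)%N by move=> k /andP[].
case: (ex_maxnP exP ubP) => k /andP [/existsP [K /andP [/eqP cK /cliqueP clK]] kr] maxk.
exists K, k; split => //; split => //; split.
  by rewrite kr andbT; apply: maxk.
move=> S clS cS.
case: (ltnP k r) => hkr.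
  have : Pk k.+1.
    by rewrite /Pk hkr andbT; apply/existsP; exists S; rewrite cS eqxx /=; apply/cliqueP.
  by move/maxk; rewrite ltnn.
have kr' : k = r by apply/eqP; rewrite eqn_leq kr hkr.
by apply: noK; exists S; rewrite cS kr'.
Qed.

Lemma counting n (e : rel 'I_n) (K : {set 'I_n}) k : simple_graph e ->
  #|K| = k -> is_clique e K -> (2 <= k)%N ->
  (forall S, is_clique e S -> #|S| = k.+1 -> False) ->
  exists A B : {set 'I_n}, (forall w, w \in A -> w \notin B) /\
   (forall w w', w \in A -> w' \in A -> ~~ e w w') /\
   (forall w w', w \in B -> w' \in B -> ~~ e w w') /\
   ((\sum_(v in K) deg e v) * 2 + n * 4 <= k * n * 2 + k * (#|A| + #|B|))%N.
Proof.
move=> [esym eirr] cK clK k2 F0.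
have F1 : forall w, (forall u, u \in K -> e w u) -> False.
  move=> w H.
  have wK : w \notin K by apply/negP => /H; rewrite eirr.
  apply: (F0 (w |: K)); last by rewrite cardsU1 wK cK.
  by apply: clique_add => // y yK _; apply: H.
pose B v := [set w | ~~ e w v & [forall u in K, (u != v) ==> e w u]].
have BP v w : w \in B v -> ~~ e w v /\ (forall u, u \in K -> u != v -> e w u).
  rewrite inE => /andP [h1 /forall_inP h2]; split => // u uK uv.
  by move: (h2 u uK) => /implyP; apply.
have F2 : forall v w w', v \in K -> w \in B v -> w' \in B v -> ~~ e w w'.
  move=> v w w' vK /BP [wv wB] /BP [w'v w'B]; apply/negP => eww'.
  have w'nK : w' \notin K :\ v.
    by apply/negP; rewrite in_setD1 => /andP [h1 h2]; move: (w'B w' h2 h1); rewrite eirr.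
  have wnK : w \notin w' |: (K :\ v).
    rewrite in_setU1 negb_or; apply/andP; split.
      by apply: contraTneq eww' => ->; rewrite eirr.
    by apply/negP; rewrite in_setD1 => /andP [h1 h2]; move: (wB w h2 h1); rewrite eirr.
  apply: (F0 (w |: (w' |: (K :\ v)))).
    apply: clique_add => //.
      apply: clique_add => //; first by apply: clique_sub clK; apply: subsetDl.
      by move=> y; rewrite in_setD1 => /andP [h1 h2] _; apply: w'B.
    move=> y; rewrite in_setU1 => /orP [/eqP -> _ // | ]. 
    by rewrite in_setD1 => /andP [h1 h2] _; apply: wB.
  by rewrite cardsU1 wnK cardsU1 w'nK -cK (cardsD1 v K) vK.
have F3 : forall u v w, u \in K -> v \in K -> u != v -> w \in B u -> w \notin B v.
  move=> u v w uK vK uv /BP [_ h]; apply/negP => /BP [h' _].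
  by move: (h v vK); rewrite eq_sym uv (negbTE h') => /(_ isT).
have PW : forall w, (#|[set v in K | e v w]| + 2 <= k + #|[set v in K | w \in B v]|)%N.
  move=> w.
  have cID : (#|[set v in K | e v w]| + #|[set v in K | ~~ e v w]|)%N = k.
    have -> : [set v in K | e v w] = K :&: [set v | e v w] by apply/setP => v; rewrite !inE.
    have -> : [set v in K | ~~ e v w] = K :\: [set v | e v w].
      by apply/setP => v; rewrite !inE andbC.
    by rewrite cardsID.
  case hM : #|[set v in K | ~~ e v w]| => [|[|mm]].
  - exfalso; apply: (F1 w) => u uK.
    move/cards0_eq/setP: hM => /(_ u); rewrite !inE uK /= esym.
    by case: (e w u).
  - have /cards1P [v0 hv0] : #|[set v in K | ~~ e v w]| == 1%N by rewrite hM.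
    have v0in : v0 \in [set v in K | ~~ e v w] by rewrite hv0 set11.
    move: (v0in); rewrite inE => /andP [v0K nev0].
    have wB : w \in B v0.
      rewrite inE esym nev0 /=; apply/forall_inP => u uK; apply/implyP => uv0.
      rewrite esym; apply/negPn/negP => neu.
      have : u \in [set v in K | ~~ e v w] by rewrite inE uK neu.
      by rewrite hv0 inE (negbTE uv0).
    have : (0 < #|[set v in K | w \in B v]|)%N.
      by apply/card_gt0P; exists v0; rewrite inE v0K wB.
    lia.
  - lia.
have SUM : ((\sum_(v in K) deg e v) + n * 2 <= k * n + \sum_(v in K) #|B v|)%N.
  have E1 : (\sum_(v in K) deg e v = \sum_w #|[set v in K | e v w]|)%N by rewrite -dc.
  have E2 : (\sum_(v in K) #|B v| = \sum_w #|[set v in K | w \in B v]|)%N.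
    rewrite -dc; apply: eq_bigr => v _.
    by have -> : [set w | w \in B v] = B v by apply/setP => w; rewrite inE.
  rewrite E1 E2.
  have : (\sum_w (#|[set v in K | e v w]| + 2) <= \sum_w (k + #|[set v in K | w \in B v]|))%N.
    by apply: leq_sum => w _; apply: PW.
  rewrite !big_split /= !sum_nat_const !card_ord.
  lia.
have [v0 v0K] : exists v0, v0 \in K by apply/card_gt0P; rewrite cK; lia.
pose f v := #|B v|.
case: (@arg_maxnP _ v0 (fun v => v \in K) f v0K) => a aK amax.
have cKa : #|K :\ a| = (k - 1)%N by move: (cardsD1 a K); rewrite aK cK; lia.
have [v1 v1K] : exists v1, v1 \in K :\ a by apply/card_gt0P; rewrite cKa; lia.
case: (@arg_maxnP _ v1 (fun v => v \in K :\ a) f v1K) => b bKa bmax.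
move: (bKa); rewrite in_setD1 => /andP [ba bK].
exists (B a), (B b); split.
  by move=> w; apply: F3 => //; rewrite eq_sym.
split; first by move=> w w'; apply: F2.
split; first by move=> w w'; apply: F2.
have fba : (f b <= f a)%N by apply: amax.
have Hs : (\sum_(v in K) #|B v| <= f a + (k - 1) * f b)%N.
  rewrite (big_setD1 a aK) /= -cKa -sum_nat_const leq_add2l.
  by apply: leq_sum => v vKa; apply: bmax.
have H2 : (2 * (f a + (k - 1) * f b) <= k * (f a + f b))%N.
  move: (k2) fba; case: (k) => [|[|m]] //= _ fba'.
  have : (m * f b <= m * f a)%N by apply: leq_mul.
  rewrite subn1 /=. nia.
rewrite /f in Hs H2 *.
move: SUM Hs H2; move: (\sum_(v in K) deg e v) (\sum_(v in K) #|B v|) #|B a| #|B b| => D S x y; nia.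
Qed.

Lemma main_x (R : realType) n r (e : rel 'I_n) :
  (3 <= r)%N -> (1 <= n)%N -> simple_graph e -> ~ has_Kk e r.+1 ->
  exists x : 'rV[R]_n, (x *m signless_laplacian R e *m x^T) 0 0 <
    (1 - 3 / (3 * r%:R - 1)) * n%:R * (x *m x^T) 0 0.
Proof.
move=> r3 n1 [esym eirr] noK.
set c := (1 - 3 / (3 * r%:R - 1)) * n%:R.
have rR : 3 <= r%:R :> R by rewrite (ler_nat R 3 r).
have nR : 1 <= n%:R :> R by rewrite (ler_nat R 1 n).
have d0' : 0 < 3 * r%:R - 1 :> R by lra.
have d0 := lt0r_neq0 d0'.
have key : c * (3 * r%:R - 1) = (3 * r%:R - 4) * n%:R by rewrite /c; field.
have cpos : 0 < c by nra.
have cn : c < n%:R by nra.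
case: (boolP [exists v, (deg e v)%:R < c]) => [/existsP [v Hv] | /existsPn Hall].
  exists (delta_mx 0 v).
  have [h1 h2] := quad_delta R n e v eirr.
  by rewrite h1 h2 mulr1.
have Hd v : c <= (deg e v)%:R by rewrite leNgt; apply: Hall.
pose v0 : 'I_n := Ordinal n1.
have : (0 < deg e v0)%N by rewrite -(ltr0n R); apply: lt_le_trans (Hd v0).
case/card_gt0P => u; rewrite inE => ev0u.
have [K [k [cK [clK [/andP [k2 kr] F0]]]]] :=
  maxclique _ _ _ (conj esym eirr) noK (leq_trans (isT : (2 <= 3)%N) r3) (ex_intro _ v0 (ex_intro _ u ev0u)).
have [A [B [dAB [iA [iB HN]]]]] := counting _ _ _ _ (conj esym eirr) cK clK k2 F0.
have cU : #|A :|: B| = (#|A| + #|B|)%N.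
  rewrite cardsU; have -> : A :&: B = finset.set0.
    by apply/setP => w; rewrite !inE; apply/negP => /andP [wA wB]; move: (dAB w wA); rewrite wB.
  by rewrite cards0 subn0.
have Un : (#|A :|: B| <= n)%N by have := max_card (mem (A :|: B)); rewrite card_ord.
have [h1 h2] := two_sets R n e A B esym dAB iA iB.
set x := \row_w _ in h1 h2.
exists x; rewrite h2; apply: le_lt_trans h1 _.
rewrite natrB // cU.
have HR : ((\sum_(v in K) deg e v) * 2 + n * 4)%:R <= (k * n * 2 + k * (#|A| + #|B|))%:R :> R.
  by rewrite ler_nat.
rewrite !natrD !natrM natr_sum in HR.
have SD : k%:R * c <= \sum_(v in K) (deg e v)%:R :> R.
  rewrite mulrC mulr_natr -cK -sumr_const; apply: ler_sum => v _; apply: Hd.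
have kR : 2 <= k%:R :> R by rewrite (ler_nat R 2 k).
have krR : k%:R <= r%:R :> R by rewrite ler_nat.
move: HR SD; rewrite natrD.
move: (\sum_(v in K) (deg e v)%:R) => D.
move: (#|A|%:R) (#|B|%:R) => a b HR SD.
have h3 : (3 * k%:R - 4) * n%:R * (3 * r%:R - 1) < 3 * k%:R * (3 * r%:R - 4) * n%:R :> R.
  have -> : 3 * k%:R * (3 * r%:R - 4) * n%:R = (3 * k%:R - 4) * n%:R * (3 * r%:R - 1)
     + (12 * r%:R - 4 - 9 * k%:R) * n%:R :> R by ring.
  by rewrite ltrDl; apply: mulr_gt0; lra.
have h4 : (3 * k%:R - 4) * n%:R < 3 * k%:R * c :> R.
  rewrite -(ltr_pM2r d0').
  have -> : 3 * k%:R * c * (3 * r%:R - 1) = 3 * k%:R * (3 * r%:R - 4) * n%:R :> R.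
    transitivity (3 * k%:R * (c * (3 * r%:R - 1)) : R); first by ring.
    transitivity (3 * k%:R * ((3 * r%:R - 4) * n%:R) : R); last by ring.
    by congr (_ * _); exact: key.
  exact: h3.
have h5 : k%:R * (n%:R - (a + b)) < k%:R * c by nra.
have h6 : n%:R - (a + b) < c.
  by rewrite -(ltr_pM2l (_ : 0 < k%:R)) //; lra.
have h7 : 0 < a + b :> R by lra.
rewrite [c * _]mulrC; rewrite ltr_pM2l //.
Qed.

Theorem theorem6 (R : realType) (n r : nat) (e : rel 'I_n) :
  (3 <= r)%N -> (1 <= n)%N -> simple_graph e -> ~ has_Kk e r.+1 ->
  q_min R e < (1 - 3 / (3 * r%:R - 1)) * n%:R.
Proof.
move=> r3 n1 sg noK.
have [x Hx] := main_x R n r e r3 n1 sg noK.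
have [esym eirr] := sg.
have Asym : (signless_laplacian R e)^T = signless_laplacian R e.
  apply/matrixP => i j; rewrite !mxE esym eq_sym.
  by case: eqP => [->|]; rewrite ?mul0r.
have [a [ea alt]] := rayleigh R n _ x _ Asym Hx.
rewrite /q_min; apply: le_lt_trans alt.
apply: (ge_inf _ ea).
by exists 0 => y /= Hy; apply: eig_ge0 Hy.
Qed.
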